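(* Let $k \geq 2$ be an integer, let $G$ be a $k$-connected $(K_2 \cup kK_1)$-free graph, and let $C$ be a longest cycle in $G$. Then every component of $G - V(C)$ consists of a single vertex.
   Context: All graphs are finite, undirected and simple. For graphs $R, R'$, $R \cup R'$ is their disjoint union and $kR$ is the disjoint union of $k$ copies of $R$; $K_n$ is the complete graph on $n$ vertices. A graph $G$ is $R$-free if it contains no induced subgraph isomorphic to $R$. *)

(* Defs.v *)
(* A simple graph is a symmetric irreflexive relation e on a finType T. *)
From mathcomp Require Import all_boot all_order.
Set Implicit Arguments. Unset Strict Implicit. Unset Printing Implicit Defensive.

Definition restrict_rel (T : finType) (e : rel T) (S : pred T) : rel T :=
  [rel a b | [&& e a b, S a & S b]].

Definition k_connected (T : finType) (e : rel T) (k : nat) : Prop :=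
  k < #|T| /\
  forall X : {set T}, #|X| < k ->
    forall x y, x \notin X -> y \notin X ->
      connect (restrict_rel e [pred v | v \notin X]) x y.

Definition induced_sub (V : finType) (eR : rel V) (T : finType) (e : rel T) : Prop :=
  exists f : V -> T, injective f /\ forall x y, e (f x) (f y) = eR x y.

Definition free (V : finType) (eR : rel V) (T : finType) (e : rel T) : Prop :=
  ~ induced_sub eR e.

Definition K2_kK1 (k : nat) : rel 'I_(k.+2) :=
  [rel x y | ((val x == 0) && (val y == 1)) || ((val x == 1) && (val y == 0))].

Definition is_cycle (T : finType) (e : rel T) (c : seq T) : Prop :=
  [/\ uniq c, 2 < size c & cycle e c].

Definition longest_cycle (T : finType) (e : rel T) (c : seq T) : Prop :=
  is_cycle e c /\ forall c', is_cycle e c' -> size c' <= size c.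
Arguments K2_kK1 k : clear implicits.

(* Main.v *)
Require Import Defs.
From mathcomp Require Import all_boot all_order.
Set Implicit Arguments. Unset Strict Implicit. Unset Printing Implicit Defensive.

Section Aux.
Variables (T : finType) (e : rel T).
Hypothesis esym : symmetric e.

Lemma path_restr (S : pred T) a p :
  path (restrict_rel e S) a p -> path e a p && all S p.
Proof.
elim: p a => //= b p IH a /andP[/and3P[eab _ Sb] /IH /andP[-> ->]].
by rewrite eab Sb.
Qed.

Lemma cyc_split (r : rel T) x0 s1 y0 s2 : cycle r (x0 :: s1 ++ y0 :: s2) ->
  [/\ path r x0 s1, r (last x0 s1) y0, path r y0 s2 & r (last y0 s2) x0].
Proof.
rewrite /= rcons_cat cat_path /= rcons_path.
by move=> /andP[-> /andP[-> /andP[-> ->]]].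
Qed.

Lemma cyc_join (r : rel T) a P b Q : path r a P -> r (last a P) b ->
  path r b Q -> r (last b Q) a -> cycle r (a :: P ++ b :: Q).
Proof.
move=> h1 h2 h3 h4; rewrite /= rcons_cat cat_path h1 /= h2 rcons_path h3 h4.
by [].
Qed.

Lemma cyc1 (r : rel T) y s : cycle r (y :: s) -> path r y s /\ r (last y s) y.
Proof. by rewrite /= rcons_path => /andP. Qed.

Variable c : seq T.
Hypotheses (Uc : uniq c) (Cc : cycle e c) (Sc : 2 < size c)
  (Lc : forall c', is_cycle e c' -> size c' <= size c).

Lemma next_injc a b : next c a = next c b -> a = b.
Proof. exact: (can_inj (prev_next Uc)). Qed.

Lemma extA u a P' : u \in c -> e u a -> path e a P' -> uniq (a :: P') ->
  all (fun v => v \notin c) (a :: P') -> ~~ e (last a P') (next c u).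
Proof.
move=> uc eua pP uP aP; apply/negP => el.
set y := next c u.
have yc : y \in c by rewrite mem_next.
case: (rot_to yc) => i s' Hr.
have /cyc1 [ps ls] : cycle e (y :: s') by rewrite -Hr rot_cycle.
have /cyc1 [_ ln] : fcycle (next c) (y :: s') by rewrite -Hr rot_cycle; exact: cycle_next.
have inc v : v \in y :: s' -> v \in c by rewrite -Hr mem_rot.
have lu : last y s' = u.
  apply: next_injc; rewrite (eqP ln) //.
have Uy : uniq (y :: s') by rewrite -Hr rot_uniq.
have := @Lc ((y :: s') ++ (a :: P')).
rewrite size_cat -(size_rot i c) Hr -[X in _ <= X]addn0 leq_add2l /= => H.
match type of H with ?A -> _ => suff Hc : A by move: (H Hc) end. split.
- rewrite -cat_cons cat_uniq Uy uP andbT; apply/hasPn => v vP; apply/negP => /inc.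
  by move/allP: aP => /(_ v vP) /negP.
- have := Sc; rewrite -(size_rot i c) Hr => Sc'.
  by rewrite -cat_cons size_cat (leq_trans Sc') // leq_addr.
- by rewrite /= rcons_cat cat_path /= rcons_path ps lu eua pP el.
Qed.

Lemma extB u w a P' : u \in c -> w \in c -> u != w -> e u a -> path e a P' ->
  uniq (a :: P') -> all (fun v => v \notin c) (a :: P') -> e (last a P') w ->
  ~~ e (next c u) (next c w).
Proof.
move=> uc wc uw eua pP uP aP el; apply/negP => exy.
set x0 := next c u; set y0 := next c w.
have x0c : x0 \in c by rewrite mem_next.
have y0c : y0 \in c by rewrite mem_next.
have nxy : x0 != y0 by apply/negP => /eqP /next_injc /eqP; apply/negP.
case: (rot_to_arc Uc x0c y0c nxy) => i p1 p2 _ _ Hr.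
have /cyc_split [p1p _ p2p _] : cycle e (x0 :: p1 ++ y0 :: p2) by rewrite -Hr rot_cycle.
have /cyc_split [_ n1 _ n2] : fcycle (next c) (x0 :: p1 ++ y0 :: p2)
  by rewrite -Hr rot_cycle; exact: cycle_next.
have inc v : v \in x0 :: p1 ++ y0 :: p2 -> v \in c by rewrite -Hr mem_rot.
have lw : last x0 p1 = w.
  apply: next_injc; rewrite (eqP n1) //.
have lu : last y0 p2 = u.
  apply: next_injc; rewrite (eqP n2) //.
set w' := last x0 p1; set R1 := rev (belast x0 p1).
have hrev : rev (x0 :: p1) = w' :: R1 by rewrite {1}(lastI x0 p1) rev_rcons.
have lR : last w' R1 = x0.
  by rewrite -(last_cons x0) -hrev rev_cons last_rcons.
have pR : path e w' R1.
  rewrite /w' /R1 rev_path.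
  have -> : path (fun z => e^~ z) x0 p1 = path e x0 p1.
    by apply: eq_path => z1 z2; rewrite /= esym.
  exact: p1p.
have Uy : uniq (x0 :: p1 ++ y0 :: p2) by rewrite -Hr rot_uniq.
have := @Lc ((a :: P') ++ (w' :: R1) ++ (y0 :: p2)).
rewrite -hrev !size_cat size_rev.
have Hsz : size (x0 :: p1) + size (y0 :: p2) = size c.
  by rewrite -(size_rot i c) Hr /= size_cat /= addSn.
rewrite Hsz.
rewrite -[X in _ <= X]add0n leq_add2r /= => H.
match type of H with ?A -> _ => suff Hc : A by move: (H Hc) end. split.
- rewrite -cat_cons cat_uniq uP.
  have hperm : perm_eq (rev (x0 :: p1) ++ y0 :: p2) (x0 :: p1 ++ y0 :: p2).
    by rewrite -[x0 :: p1 ++ _]cat_cons perm_cat2r perm_rev.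
  rewrite (perm_uniq hperm) Uy andbT.
  apply/hasPn => v vr; rewrite (perm_mem hperm) in vr; apply/negP => vP.
  by move/allP: aP => /(_ v vP) /negP; apply; apply: inc.
- rewrite -cat_cons !size_cat size_rev Hsz.
  by rewrite (leq_trans Sc) // leq_addl.
- rewrite hrev; apply: cyc_join => //; first by rewrite /w' lw.
  - by rewrite cat_path pR lR /= exy p2p.
  - by rewrite last_cat lR /= lu.
Qed.
End Aux.

Theorem mainTheorem8 (k : nat) (T : finType) (e : rel T) :
  2 <= k -> symmetric e -> irreflexive e ->
  k_connected e k -> free (K2_kK1 k) e ->
  forall c : seq T, longest_cycle e c ->
  (* every component of G - V(C) is a single vertex *)
  forall x y : T, x \notin c -> y \notin c ->
    connect (restrict_rel e [pred v | v \notin c]) x y -> x = y.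
Proof.
move=> hk esym eirr [kT kc] hfree c [[Uc Sc Cc] Lc] x y xc yc cxy.
case: (eqVneq x y) => // nxy; exfalso.
set R := restrict_rel e [pred v | v \notin c] in cxy.
have Rsym : symmetric R.
  by move=> a b; rewrite /R /restrict_rel /= esym (andbC (a \notin c)).
have [y1 xy1 y1c] : exists2 y1, e x y1 & y1 \notin c.
  case/connectP: cxy => [[|b p]] /=; first by move=> _ /eqP; rewrite eq_sym (negbTE nxy).
  by case/andP => /and3P[h1 _ h2] _ _; exists b.
set H := fun v => connect R x v.
have HnotC v : H v -> v \notin c.
  case/connectP => p pR ->.
  have /andP[_ aS] := path_restr pR.
  have : all [pred v | v \notin c] (x :: p) by rewrite /= xc.
  by move/allP => /(_ _ (mem_last x p)).
have Hpath a b : H a -> H b -> exists P', [/\ path e a P', uniq (a :: P'),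
    all (fun v => v \notin c) (a :: P') & last a P' = b].
  move=> Ha Hb.
  have cab : connect R a b.
    apply: connect_trans Hb; by rewrite (sym_connect_sym Rsym).
  case/connectP: cab => p pR ->.
  case: (shortenP pR) => p' pR' up' _.
  have /andP[pe aS] := path_restr pR'.
  by exists p'; split => //=; rewrite HnotC.
set N := [set u in c | [exists v, H v && e u v]].
have Nc u : u \in N -> u \in c by rewrite inE => /andP[].
have claim1 u : u \in N -> next c u \notin N.
  rewrite !inE => /andP[uc /existsP[v1 /andP[Hv1 ev1]]].
  apply/negP => /andP[_ /existsP[v2 /andP[Hv2 ev2]]].
  have [P' [pP uP aP lP]] := Hpath v1 v2 Hv1 Hv2.
  have := extA Uc Cc Sc Lc uc ev1 pP uP aP.
  by rewrite lP esym ev2.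
have claim2 u w : u \in N -> w \in N -> u != w -> ~~ e (next c u) (next c w).
  rewrite !inE => /andP[uc /existsP[v1 /andP[Hv1 ev1]]].
  move=> /andP[wc /existsP[v2 /andP[Hv2 ev2]]] uw.
  have [P' [pP uP aP lP]] := Hpath v1 v2 Hv1 Hv2.
  apply: (extB esym Uc Cc Sc Lc uc wc uw ev1 pP uP aP).
  by rewrite lP esym.
have claim3 : k <= #|N|.
  rewrite leqNgt; apply/negP => hN.
  have [z zc zN] : exists2 z, z \in c & z \notin N.
    case: (set_0Vmem N) => [N0 | [u uN]].
      exists (nth x c 0); first by rewrite mem_nth // (ltn_trans _ Sc).
      by rewrite N0 inE.
    by exists (next c u); rewrite ?mem_next ?Nc ?claim1.
  have xN : x \notin N by apply/negP => /Nc; apply/negP.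
  have := kc N hN x z xN zN.
  case/connectP => p pR' ez.
  suff : H z by move/HnotC; rewrite zc.
  have step : forall a q, H a ->
      path (restrict_rel e [pred v | v \notin N]) a q -> H (last a q).
    move=> a q; elim: q a => //= b q IH a Ha /andP[/and3P[eab _ bN] pp].
    suff Hb : H b by exact: IH Hb pp.
    have bc : b \notin c.
      apply/negP => bc; move/negP: bN; apply; rewrite inE bc /=.
      by apply/existsP; exists a; rewrite Ha esym.
    have aNc := HnotC a Ha; apply: connect_trans Ha (connect1 _).
    by rewrite /R /restrict_rel /= eab bc aNc.
  by rewrite ez; apply: step pR'; exact: connect0.
set s := enum N.
have ss : k <= size s by rewrite -cardE.
set g := fun j => next c (nth x s j).
have gN j : j < k -> nth x s j \in N.
  by move=> jk; rewrite -mem_enum; apply: mem_nth; exact: leq_trans jk ss.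
have gc j : j < k -> g j \in c by move=> jk; rewrite /g mem_next Nc ?gN.
have gH j v : j < k -> H v -> e (g j) v = false.
  move=> jk Hv; apply/negP => egv.
  move/negP: (claim1 _ (gN j jk)); apply; rewrite inE gc //=.
  by apply/existsP; exists v; rewrite Hv egv.
have nthne i j : i < k -> j < k -> i != j -> nth x s i != nth x s j.
  move=> ik jk ij; rewrite nth_uniq ?enum_uniq //.
  - exact: leq_trans ik ss.
  - exact: leq_trans jk ss.
have gg i j : i < k -> j < k -> e (g i) (g j) = false.
  move=> ik jk; case: (eqVneq i j) => [->|ij]; first exact: eirr.
  by apply/negbTE/claim2; rewrite ?gN ?nthne.
have ginj i j : i < k -> j < k -> g i = g j -> i = j.
  move=> ik jk /(next_injc Uc) /eqP E; apply/eqP; apply: contraTT E.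
  exact: nthne.
have Hx : H x by exact: connect0.
have Hy1 : H y1 by apply: connect1; rewrite /R /restrict_rel /= xy1 xc y1c.
have xgc j : j < k -> x <> g j by move=> jk E; move: xc; rewrite E gc.
have y1gc j : j < k -> y1 <> g j by move=> jk E; move: y1c; rewrite E gc.
have xy1ne : x <> y1 by move=> E; move: xy1; rewrite E eirr.
pose fn := fun n : nat => match n with 0 => x | 1 => y1 | j.+2 => g j end.
have fninj : forall i j, i < k.+2 -> j < k.+2 -> fn i = fn j -> i = j.
{ case=> [|[|i]]; case=> [|[|j]] hi hj E //; rewrite /fn /= in E; rewrite ?ltnS in hi hj.
  - exfalso; exact: (xgc _ hj E).
  - exfalso; apply: xy1ne; by rewrite E.
  - exfalso; exact: (y1gc _ hj E).
  - exfalso; exact: (xgc _ hi (Logic.eq_sym E)).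
  - exfalso; exact: (y1gc _ hi (Logic.eq_sym E)).
  - by rewrite (ginj _ _ hi hj E). }
pose f := fun i : 'I_k.+2 => fn (val i).
apply: hfree; exists f; split.
  by move=> i j E; apply/val_inj/fninj => //; exact: ltn_ord.
move=> [[|[|i]] hi] [[|[|j]] hj]; rewrite /f /K2_kK1 /=.
- exact: eirr.
- exact: xy1.
- by rewrite esym gH.
- by rewrite esym.
- exact: eirr.
- by rewrite esym gH.
- by rewrite gH.
- by rewrite gH.
- by rewrite gg.
Qed.
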